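(* Let $G=(V,E)$ be a finite graph and suppose that both $I_1,\dots,I_d$ and $\bar I_1,\dots,\bar I_{\bar d}$ are partitions of $V$ into maximal independent sets characterizing $G$ as a mean valid graph. If $|I_j|\ne|\bar I_k|$, then $I_j\cap\bar I_k=\emptyset$.
   Context: A partition $V=I_1\sqcup\dots\sqcup I_d$ ($d\ge2$) of the vertex set into pairwise disjoint maximal independent sets, ordered with $|I_1|\ge\dots\ge|I_d|$, characterizes $G$ as a mean valid graph if every independent set $I$ of $G$ satisfies $\sum_{s=1}^d|I\cap I_s|/|I_s|\le1$. *)

(* Defs.v *)
From mathcomp Require Import all_boot all_order all_algebra.
Set Implicit Arguments. Unset Strict Implicit. Unset Printing Implicit Defensive.
Import Order.TTheory GRing.Theory Num.Theory.

Definition simple_graph (T : finType) (e : rel T) : Prop :=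
  symmetric e /\ irreflexive e.

Definition independent (T : finType) (e : rel T) (S : {set T}) : Prop :=
  forall x y, x \in S -> y \in S -> ~~ e x y.

Definition maximal_independent (T : finType) (e : rel T) (S : {set T}) : Prop :=
  independent e S /\
  (forall S' : {set T}, independent e S' -> S \subset S' -> S' = S).

(* V = I_1 ⊔ ... ⊔ I_d, d >= 2, pairwise disjoint maximal independent sets,
   ordered |I_1| >= ... >= |I_d| (indices 0..d-1). *)
Definition mis_partition (T : finType) (e : rel T) (d : nat) (I : 'I_d -> {set T}) : Prop :=
  [/\ (2 <= d)%N,
      (forall i, maximal_independent e (I i)),
      (forall i j, i != j -> [disjoint I i & I j]),
      (forall x : T, exists i, x \in I i) &
      (forall i j : 'I_d, (i <= j)%N -> (#|I j| <= #|I i|)%N)].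

Definition mean_valid_partition (T : finType) (e : rel T) (d : nat) (I : 'I_d -> {set T}) : Prop :=
  mis_partition e I /\
  (forall S : {set T}, independent e S ->
     (\sum_(s < d) (#|S :&: I s|%:R / #|I s|%:R : rat) <= 1)%R).

(* Main.v *)
From mathcomp Require Import all_boot all_order all_algebra.
Import Order.TTheory GRing.Theory Num.Theory.
Set Implicit Arguments. Unset Strict Implicit.
Local Open Scope ring_scope.

Section P.
Variables (T : finType) (n : nat) (P : 'I_n -> {set T}).
Hypothesis Pdis : forall i j, i != j -> [disjoint P i & P j].
Hypothesis Pcov : forall x : T, exists i, x \in P i.
Hypothesis Pne : forall i, (0 < #|P i|)%N.

Definition W (v : T) : rat := \sum_s (v \in P s)%:R / #|P s|%:R.

Lemma notin_other v s s0 : v \in P s0 -> s != s0 -> v \notin P s.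
Proof. move=> vs0 ns; have := @Pdis _ _ ns; rewrite disjoint_sym => D; by rewrite (disjointFr D vs0). Qed.

Lemma L1 v s : v \in P s -> W v = (#|P s|%:R)^-1.
Proof.
move=> vs; rewrite /W (bigD1 s) //= vs big1 ?addr0 ?mul1r //.
by move=> i ni; rewrite (negbTE (notin_other vs ni)) mul0r.
Qed.

Lemma L2 (g : T -> rat) :
  \sum_v W v * g v = \sum_s (#|P s|%:R)^-1 * \sum_(v in P s) g v.
Proof.
rewrite /W; under eq_bigr do rewrite big_distrl /=.
rewrite exchange_big /=; apply: eq_bigr => s _.
rewrite big_distrr /= [RHS]big_mkcond /=; apply: eq_bigr => v _.
by case: (v \in P s); rewrite ?mul0r ?mulr0 // mul1r mulrC.
Qed.

Lemma L3 (f : T -> rat) : \sum_v f v = \sum_s \sum_(v in P s) f v.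
Proof.
under [RHS]eq_bigr do rewrite big_mkcond /=.
rewrite exchange_big /=; apply: eq_bigr => v _.
have [s0 vs0] := Pcov v.
rewrite (bigD1 s0) //= vs0 big1 ?addr0 //.
by move=> i ni; rewrite (negbTE (notin_other vs0 ni)).
Qed.

Lemma L5 s : \sum_(v in P s) W v = 1.
Proof.
rewrite (eq_bigr (fun _ => (#|P s|%:R)^-1)); last by move=> v vs; rewrite (L1 vs).
rewrite sumr_const -[_ *+ _]mulr_natl mulfV // pnatr_eq0 -lt0n; exact: Pne.
Qed.

Lemma L4 (S : {set T}) :
  \sum_(v in S) W v = \sum_s #|S :&: P s|%:R / #|P s|%:R.
Proof.
rewrite /W exchange_big /=; apply: eq_bigr => s _.
rewrite -big_distrl /=; congr (_ * _).
rewrite -sum1_card natr_sum.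
rewrite big_mkcond [RHS]big_mkcond /=; apply: eq_bigr => v _; rewrite inE; by case: (v \in S); case: (v \in P s).
Qed.

Lemma Lsum : \sum_v W v = n%:R.
Proof.
rewrite L3 (eq_bigr (fun _ => 1)); last by move=> s _; rewrite L5.
by rewrite sumr_const card_ord.
Qed.
End P.

Require Import Defs.
From mathcomp Require Import ring.

Lemma ne_block (T : finType) (e : rel T) (d : nat) (I : 'I_d -> {set T}) (x : T) :
  irreflexive e -> (forall i, maximal_independent e (I i)) -> forall s, (0 < #|I s|)%N.
Proof.
move=> irr mis s; rewrite card_gt0; apply/negP => /eqP E.
have [_ M] := mis s.
have H : independent e [set x].
  by move=> a b; rewrite !inE => /eqP-> /eqP->; rewrite irr.
have := M _ H; rewrite E sub0set => /(_ isT) /setP /(_ x).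
by rewrite !inE eqxx.
Qed.

Theorem lemma10 (T : finType) (e : rel T) (d db : nat)
  (I : 'I_d -> {set T}) (Ib : 'I_db -> {set T}) :
  simple_graph e ->
  mean_valid_partition e I ->
  mean_valid_partition e Ib ->
  forall (j : 'I_d) (k : 'I_db), #|I j| <> #|Ib k| -> I j :&: Ib k = set0.
Proof.
move=> [_ irr] [[_ Imis Idis Icov _] Ival] [[_ Ibmis Ibdis Ibcov _] Ibval] j k Hne.
apply/setP => x; rewrite inE in_set0; apply/negP => /andP[xj xk].
have Ine := ne_block x irr Imis.
have Ibne := ne_block x irr Ibmis.
set w := W I; set wb := W Ib.
have A t : \sum_(v in Ib t) w v <= 1.
  by rewrite /w (L4 I) Ival //; case: (Ibmis t).
have B s : \sum_(v in I s) wb v <= 1.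
  by rewrite /wb (L4 Ib) Ibval //; case: (Imis s).
have Sd : \sum_t (1 - \sum_(v in Ib t) w v) = db%:R - d%:R.
  rewrite sumrB sumr_const card_ord -(L3 Ibdis Ibcov) /w (Lsum Idis Icov Ine).
  by rewrite -[_ *+ _]mulr_natl mulr1.
have Sdb : \sum_s (1 - \sum_(v in I s) wb v) = d%:R - db%:R.
  rewrite sumrB sumr_const card_ord -(L3 Idis Icov) /wb (Lsum Ibdis Ibcov Ibne).
  by rewrite -[_ *+ _]mulr_natl mulr1.
have le1 : d%:R - db%:R <= 0 :> rat.
  by rewrite -oppr_ge0 opprB -Sd sumr_ge0 // => t _; rewrite subr_ge0.
have le2 : db%:R - d%:R <= 0 :> rat.
  by rewrite -oppr_ge0 opprB -Sdb sumr_ge0 // => t _; rewrite subr_ge0.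
have Ez : db%:R - d%:R = 0 :> rat.
  by apply/eqP; rewrite eq_le le2 -oppr_le0 opprB.
have Ea t : \sum_(v in Ib t) w v = 1.
  apply/eqP; rewrite eq_sym -subr_eq0; apply/eqP.
  have := psumr_eq0P (P := xpredT) (F := fun t => 1 - \sum_(v in Ib t) w v).
  move=> /(_ _ _ t isT) -> //; first by move=> i _; rewrite subr_ge0.
  by rewrite Sd.
have Eb s : \sum_(v in I s) wb v = 1.
  apply/eqP; rewrite eq_sym -subr_eq0; apply/eqP.
  have := psumr_eq0P (P := xpredT) (F := fun s => 1 - \sum_(v in I s) wb v).
  move=> /(_ _ _ s isT) -> //; first by move=> i _; rewrite subr_ge0.
  by rewrite Sdb -opprB Ez oppr0.
have Sww : \sum_v w v * w v = \sum_s (#|I s|%:R)^-1.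
  rewrite /w (L2 I); apply: eq_bigr => s _.
  by rewrite (L5 Idis Ine) mulr1.
have Swwb : \sum_v w v * wb v = \sum_s (#|I s|%:R)^-1.
  rewrite /w (L2 I); apply: eq_bigr => s _; by rewrite Eb mulr1.
have Swbwb : \sum_v wb v * wb v = \sum_t (#|Ib t|%:R)^-1.
  rewrite /wb (L2 Ib); apply: eq_bigr => s _.
  by rewrite (L5 Ibdis Ibne) mulr1.
have Swbw : \sum_v wb v * w v = \sum_t (#|Ib t|%:R)^-1.
  rewrite /wb (L2 Ib); apply: eq_bigr => s _; by rewrite Ea mulr1.
have Z : \sum_v (w v - wb v) ^+ 2 = 0.
  have -> : \sum_v (w v - wb v) ^+ 2 =
    (\sum_v w v * w v - \sum_v w v * wb v) + (\sum_v wb v * wb v - \sum_v wb v * w v).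
    rewrite -!sumrB -big_split /=; apply: eq_bigr => v _.
    by rewrite sqrrB expr2 [wb v * w v]mulrC; ring.
  by rewrite Sww Swwb Swbwb Swbw !subrr ?addr0.
have := psumr_eq0P (P := xpredT) (F := fun v => (w v - wb v) ^+ 2).
move=> /(_ (fun v _ => sqr_ge0 _) Z x isT) /eqP.
rewrite sqrf_eq0 subr_eq0 /w /wb (L1 Idis xj) (L1 Ibdis xk).
move=> /eqP /invr_inj /eqP; rewrite eqr_nat => /eqP; exact: Hne.
Qed.
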